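(* Let $T\in V$ be a target variable. If $0<\zeta_T<n$ and $\Upsilon$ is conservative, then $\bigcup_{i=1}^{n}MB_i(T)=MB(T)$.
   Context: Let $G=(V,E)$ be a DAG (causal Bayesian network) over a finite set $V$ of random variables with joint distribution $P$ satisfying the Markov condition with respect to $G$; causal sufficiency is assumed. For $X\in V$, $pa(X)$ and $ch(X)$ are the parents and children of $X$ in $G$, $sp(X)=\big(\bigcup_{Y\in ch(X)}pa(Y)\big)\setminus\{X\}$ is the set of spouses, and $MB(X)=pa(X)\cup ch(X)\cup sp(X)$ is the Markov blanket. There are $n\ge 1$ intervention experiments; in the $i$-th, the set $\Upsilon_i\subseteq V$ (possibly empty) is manipulated, and $\Upsilon=\{\Upsilon_1,\dots,\Upsilon_n\}$. The post-intervention DAG is $G_i=(V,E_i)$ with $E_i=\{(a,b)\in E: b\notin\Upsilon_i\}$, with distribution $P_i(V)=\prod_{V_j\notin\Upsilon_i}P(V_j\mid pa(V_j))\prod_{V_j\in\Upsilon_i}P_i(V_j)$, and $D_i$ is a dataset drawn from $P_i$. It is assumed that each $P_i$ is faithful to $G_i$ and that conditional independence tests on $D_i$ are reliable (return exactly the conditional independences of $P_i$). $MB_i(T)$ denotes the Markov blanket of $T$ found in $D_i$, i.e. the set of parents, children and spouses of $T$ in $G_i$. $\zeta_T=|\{i:T\in\Upsilon_i\}|$. $\Upsilon$ is called conservative if for every $V_j\in\bigcup_{i=1}^n\Upsilon_i$ there exists $i$ with $V_j\notin\Upsilon_i$. *)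

(* Defs.v *)
From mathcomp Require Import all_boot.
Set Implicit Arguments. Unset Strict Implicit. Unset Printing Implicit Defensive.

Section Graphs.
Variable V : finType.

(* A directed graph is an edge relation: E a b means a -> b. *)
Definition acyclic (E : rel V) : Prop :=
  forall a b, E a b -> ~~ connect E b a.

Definition pa (E : rel V) (X : V) : {set V} := [set Y | E Y X].
Definition ch (E : rel V) (X : V) : {set V} := [set Y | E X Y].
Definition sp (E : rel V) (X : V) : {set V} :=
  (\bigcup_(Y in ch E X) pa E Y) :\ X.
Definition MB (E : rel V) (X : V) : {set V} := pa E X :|: ch E X :|: sp E X.

Definition post_interv (E : rel V) (U : {set V}) : rel V :=
  [rel a b | E a b && (b \notin U)].

Definition MB_i (E : rel V) (n : nat) (Ups : 'I_n -> {set V}) (i : 'I_n) (T : V)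
  : {set V} := MB (post_interv E (Ups i)) T.

Definition zeta (n : nat) (Ups : 'I_n -> {set V}) (T : V) : nat :=
  #|[set i : 'I_n | T \in Ups i]|.

Definition conservative (n : nat) (Ups : 'I_n -> {set V}) : Prop :=
  forall v, v \in (\bigcup_(i < n) Ups i) -> exists i : 'I_n, v \notin Ups i.

End Graphs.

(* Main.v *)
Require Import Defs.
From mathcomp Require Import all_boot.

Lemma notin_some (V : finType) (n : nat) (Ups : 'I_n -> {set V}) (v : V) :
  1 <= n -> conservative Ups -> exists i : 'I_n, v \notin Ups i.
Proof.
move=> n1 cons.
case: (boolP (v \in \bigcup_(i < n) Ups i)) => [/cons //|H].
exists (Ordinal n1); apply/negP => Hv; case/negP: H.
by apply/bigcupP; exists (Ordinal n1).
Qed.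

Theorem theorem5 (V : finType) (E : rel V) (n : nat) (Ups : 'I_n -> {set V})
  (T : V) :
  acyclic E -> 1 <= n ->
  0 < zeta Ups T < n ->
  conservative Ups ->
  \bigcup_(i < n) MB_i E Ups i T = MB E T.
Proof.
move=> _ n1 _ cons.
apply/eqP; rewrite eqEsubset; apply/andP; split.
- apply/bigcupsP => i _; apply/subsetP => x.
  rewrite /MB_i /MB /pa /ch /sp !inE.
  case/orP => [/orP [/andP [-> _] | /andP [-> _]] | /andP [xT /bigcupP [y]]];
    rewrite ?orbT //.
  rewrite !inE => /andP [Ty _] /andP [yx _].
  apply/orP; right; rewrite xT /=; apply/bigcupP; exists y; by rewrite inE.
- apply/subsetP => x.
  rewrite /MB /pa /ch /sp !inE.
  case/orP => [/orP [xT | Tx] | /andP [xT /bigcupP [y]]].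
  + have [i Hi] := @notin_some _ _ Ups T n1 cons.
    apply/bigcupP; exists i => //.
    by rewrite /MB_i /MB /pa !inE /post_interv /= xT Hi.
  + have [i Hi] := @notin_some _ _ Ups x n1 cons.
    apply/bigcupP; exists i => //.
    by rewrite /MB_i /MB /ch !inE /post_interv /= Tx Hi orbT.
  + rewrite !inE => Ty yx.
    have [i Hi] := @notin_some _ _ Ups y n1 cons.
    apply/bigcupP; exists i => //.
    rewrite /MB_i /MB /sp !inE xT /=; apply/orP; right.
    apply/bigcupP; exists y; by rewrite !inE /post_interv /= ?Ty ?yx Hi.
Qed.
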